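(* Let $x^*\in\mathbb{R}^n$ satisfy $Ax^*=b$, and let $x_1,\ldots,x_\ell\in\mathbb{R}^n$ be points with \[x_\ell=\operatorname{argmin}_{\xi\in\operatorname{aff}(x_1,\ldots,x_\ell)}\|\xi-x^*\|^2.\] If $P(x_\ell)\in\operatorname{aff}(x_1,\ldots,x_\ell)$, then $r(x_\ell)=0$, $P(x_\ell)=x_\ell$ and $Ax_\ell=b$.
   Context: Let $A=(a_1,\ldots,a_m)^T\in\mathbb{R}^{m\times n}$ with rows $a_j\in\mathbb{R}^n\setminus\{0\}$, and let $b\in\mathbb{R}^m$ lie in the range of $A$. Norms are Euclidean. For $j=1,\ldots,m$ define the projectors $P_j:\mathbb{R}^n\to\mathbb{R}^n$, $P_j(x)=\big(I-\frac{a_ja_j^T}{\|a_j\|^2}\big)x+\frac{b_j}{\|a_j\|^2}a_j$ (the orthogonal projection onto $\{z:a_j^Tz=b_j\}$), and the Kaczmarz cycle $P=P_m\circ\cdots\circ P_1$. The residual $r:\mathbb{R}^n\to\mathbb{R}^m$ is defined by $r_1(x)=(a_1^Tx-b_1)/\|a_1\|$ and $r_j(x)=(a_j^T(P_{j-1}\circ\cdots\circ P_1)(x)-b_j)/\|a_j\|$ for $j=2,\ldots,m$. $\operatorname{aff}(\cdot)$ denotes the affine hull. *)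

(* Defs.v *)
(* Vectors in R^n are column vectors 'cV[R]_n; R : rcfType
   (a real closed field, so that Euclidean norms Num.sqrt exist). *)
From HB Require Import structures.
From mathcomp Require Import all_boot all_order all_algebra.
Set Implicit Arguments. Unset Strict Implicit. Unset Printing Implicit Defensive.
Import Order.TTheory GRing.Theory Num.Theory.
Local Open Scope ring_scope.

Section Kaczmarz.
Variables (R : rcfType) (m n : nat).

Definition dotv (u v : 'cV[R]_n) : R := \sum_(i < n) u i 0 * v i 0.
Definition norm2 (u : 'cV[R]_n) : R := dotv u u.
Definition enorm (u : 'cV[R]_n) : R := Num.sqrt (norm2 u).

Definition arow (A : 'M[R]_(m, n)) (j : 'I_m) : 'cV[R]_n := (row j A)^T.

(* orthogonal projection onto {z : a_j^T z = b_j} *)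
Definition Proj (A : 'M[R]_(m, n)) (b : 'cV[R]_m) (j : 'I_m) (x : 'cV[R]_n)
  : 'cV[R]_n :=
  x - (dotv (arow A j) x / norm2 (arow A j)) *: arow A j
    + (b j 0 / norm2 (arow A j)) *: arow A j.

(* Pcomp k = P_k o ... o P_1 (1-based as in the paper), Pcomp 0 = id;
   indices k > m are irrelevant since only k <= m is used. *)
Fixpoint Pcomp (A : 'M[R]_(m, n)) (b : 'cV[R]_m) (k : nat) (x : 'cV[R]_n)
  : 'cV[R]_n :=
  match k with
  | 0 => x
  | k'.+1 => match insub k' with
             | Some j => Proj A b j (Pcomp A b k' x)
             | None => Pcomp A b k' x
             end
  end.

Definition Kcycle (A : 'M[R]_(m, n)) (b : 'cV[R]_m) (x : 'cV[R]_n) : 'cV[R]_n :=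
  Pcomp A b m x.

(* residual: r_j(x) = (a_j^T (P_{j-1} o ... o P_1)(x) - b_j) / ||a_j||
   (j 1-based in the paper; here j : 'I_m is 0-based so the prefix has length j) *)
Definition resid (A : 'M[R]_(m, n)) (b : 'cV[R]_m) (x : 'cV[R]_n) : 'cV[R]_m :=
  \col_(j < m) ((dotv (arow A j) (Pcomp A b j x) - b j 0) / enorm (arow A j)).

Definition in_aff (l : nat) (xs : 'I_l -> 'cV[R]_n) (z : 'cV[R]_n) : Prop :=
  exists c : 'I_l -> R, \sum_(i < l) c i = 1 /\ z = \sum_(i < l) c i *: xs i.

End Kaczmarz.

(* Main.v *)
Require Import Defs.
From HB Require Import structures.
From mathcomp Require Import all_boot all_order all_algebra.
From mathcomp Require Import ring lra.
Import Order.TTheory GRing.Theory Num.Theory.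
Local Open Scope ring_scope.

Set Implicit Arguments.
Section H.
Variables (R : rcfType) (m n : nat).
Implicit Types (u v w : 'cV[R]_n).

Lemma dotvC u v : dotv u v = dotv v u.
Proof. by rewrite /dotv; apply: eq_bigr => i _; rewrite mulrC. Qed.
Lemma dotvDr u v w : dotv u (v + w) = dotv u v + dotv u w.
Proof. by rewrite /dotv -big_split; apply: eq_bigr => i _; rewrite mxE mulrDr. Qed.
Lemma dotvZr u (c : R) v : dotv u (c *: v) = c * dotv u v.
Proof. by rewrite /dotv mulr_sumr; apply: eq_bigr => i _; rewrite mxE mulrCA. Qed.
Lemma dotvNr u v : dotv u (- v) = - dotv u v.
Proof. by rewrite -scaleN1r dotvZr mulN1r. Qed.
Lemma dotvBr u v w : dotv u (v - w) = dotv u v - dotv u w.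
Proof. by rewrite dotvDr dotvNr. Qed.
Lemma dotvBl u v w : dotv (v - w) u = dotv v u - dotv w u.
Proof. by rewrite dotvC dotvBr !(dotvC u). Qed.
Lemma dotvZl u (c : R) v : dotv (c *: v) u = c * dotv v u.
Proof. by rewrite dotvC dotvZr dotvC. Qed.

Lemma norm2_ge0 u : 0 <= norm2 u.
Proof. by apply: sumr_ge0 => i _; rewrite -expr2 sqr_ge0. Qed.

Lemma norm2_eq0 u : norm2 u = 0 -> u = 0.
Proof.
move=> h; apply/matrixP => i k; rewrite (ord1 k) mxE.
have := psumr_eq0P (P := predT) (F := fun i => u i 0 * u i 0) _ h (i := i).
move=> /(_ (fun i _ => ltac:(by rewrite -expr2 sqr_ge0)) isT) /eqP.
by rewrite mulf_eq0 orbb => /eqP.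
Qed.

Lemma dot_arow (A : 'M[R]_(m, n)) j x : dotv (arow A j) x = (A *m x) j 0.
Proof. by rewrite /dotv mxE; apply: eq_bigr => k _; rewrite !mxE. Qed.

Lemma arow_neq0 (A : 'M[R]_(m, n)) j : row j A != 0 -> norm2 (arow A j) != 0.
Proof.
move=> h; apply/eqP => /norm2_eq0 h2; move/eqP: h; apply.
by rewrite -[row j A]trmxK; rewrite /arow in h2; rewrite h2 trmx0.
Qed.

Lemma proj_step (A : 'M[R]_(m, n)) b xstar (hx : A *m xstar = b) j z :
  norm2 (arow A j) != 0 ->
  norm2 (Proj A b j z - xstar) =
  norm2 (z - xstar) - (dotv (arow A j) z - b j 0) ^+ 2 / norm2 (arow A j).
Proof.
move=> hN.
set a := arow A j; set N := norm2 a; set d := dotv a z; set bb := b j 0.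
have hab : dotv a xstar = bb by rewrite /a dot_arow hx.
have -> : Proj A b j z - xstar = (z - xstar) - ((d - bb) / N) *: a.
  by apply/matrixP => i k; rewrite /Proj -/a -/N -/d !mxE /bb; ring.
rewrite /norm2 !dotvBl !dotvBr !dotvZl !dotvZr -/(norm2 a) -/N.
rewrite (dotvC z a) (dotvC xstar a) (dotvC xstar z) -/d hab /bb.
move: hN; rewrite -/a -/N => hN.
by field.
Qed.
End H.

Definition gfun {R : rcfType} {m n : nat} (A : 'M[R]_(m, n)) (b : 'cV[R]_m)
  (x : 'cV[R]_n) (k : nat) : R :=
  if insub k is Some j then
    (dotv (arow A j) (Pcomp A b k x) - b j 0) ^+ 2 / norm2 (arow A j)
  else 0.

Lemma sum_step {R : rcfType} {m n : nat} {A : 'M[R]_(m, n)} {b : 'cV[R]_m}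
  (hrows : forall j : 'I_m, row j A != 0) xstar (hx : A *m xstar = b) x k :
  norm2 (Pcomp A b k x - xstar) + \sum_(i < k) gfun A b x i = norm2 (x - xstar).
Proof.
elim: k => [|k IH]; first by rewrite big_ord0 addr0.
rewrite big_ord_recr /= addrA -{}IH /gfun.
case: insub => [j|]; last by rewrite addr0.
rewrite (@proj_step _ _ _ A b xstar hx j (Pcomp A b k x) (@arow_neq0 _ _ _ A j (hrows j))).
by rewrite addrAC subrK.
Qed.

Unset Implicit Arguments.
Theorem lemma6 (R : rcfType) (m n : nat) (A : 'M[R]_(m, n)) (b : 'cV[R]_m)
  (hrows : forall j : 'I_m, row j A != 0)
  (hb : exists y : 'cV[R]_n, A *m y = b)
  (xstar : 'cV[R]_n) (hxstar : A *m xstar = b)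
  (l : nat) (xs : 'I_l.+1 -> 'cV[R]_n)
  (hmin : forall xi : 'cV[R]_n, in_aff xs xi ->
            norm2 (xs ord_max - xstar) <= norm2 (xi - xstar))
  (hP : in_aff xs (Kcycle A b (xs ord_max))) :
  resid A b (xs ord_max) = 0 /\
  Kcycle A b (xs ord_max) = xs ord_max /\
  A *m xs ord_max = b.
Proof.
set x := xs ord_max.
have hs := sum_step hrows hxstar x m.
have hle := hmin _ hP; rewrite /Kcycle -/x in hle.
have gge0 : forall i : 'I_m, 0 <= gfun A b x i.
  move=> i; rewrite /gfun valK.
  by apply: divr_ge0; [exact: sqr_ge0 | exact: norm2_ge0].
have hsum0 : \sum_(i < m) gfun A b x i = 0.
  apply/eqP; rewrite eq_le; apply/andP; split; last by apply: sumr_ge0 => i _; exact: gge0.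
  by move: hle; rewrite -hs gerDl.
have hd : forall i : 'I_m, dotv (arow A i) (Pcomp A b i x) = b i 0.
  move=> i.
  have := psumr_eq0P (P := predT) (F := fun i : 'I_m => gfun A b x i)
            (fun i _ => gge0 i) hsum0 (i := i) isT.
  rewrite /gfun valK => /eqP; rewrite mulf_eq0 invr_eq0 (negbTE (@arow_neq0 _ _ _ A i (hrows i))) orbF.
  by rewrite expf_eq0 /= subr_eq0 => /eqP.
have hfix : forall k, Pcomp A b k x = x.
  elim=> [|k IH] //=.
  case: insubP => [j _ hj|_] //=.
  have := hd j; rewrite hj IH => e.
  by rewrite /Proj e subrK.
split; last split.
- by apply/matrixP => j k; rewrite !mxE hd subrr mul0r.
- exact: hfix.
- apply/matrixP => j k; rewrite (ord1 k).
  by have := hd j; rewrite hfix dot_arow.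
Qed.
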